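(* Let $R$ be a left noetherian domain and let $A=\sigma(R)\langle x_1,\dots,x_n\rangle$ be a bijective skew PBW extension of $R$. (i) The algebraic subsets of $R^n$ are the closed sets of a topology on $R^n$ (the Zariski topology); that is, $\emptyset$ and $R^n$ are algebraic, the union of two algebraic sets is algebraic, and the intersection of any family of algebraic sets is algebraic. (ii) Every finite subset $X\subseteq R^n$ is algebraic, hence closed in this topology.
   Context: Skew PBW extension: a ring $A$ is a skew PBW extension of a ring $R$, written $A=\sigma(R)\langle x_1,\dots,x_n\rangle$, if (1) $R\subseteq A$ is a subring; (2) there are $x_1,\dots,x_n\in A$ such that $A$ is a free left $R$-module with basis $\mathrm{Mon}(A)=\{x^\alpha=x_1^{\alpha_1}\cdots x_n^{\alpha_n}:\alpha\in\mathbb N^n\}$; (3) for every $i$ and every $r\in R\setminus\{0\}$ there is $c_{i,r}\in R\setminus\{0\}$ with $x_ir-c_{i,r}x_i\in R$; (4) for every $i,j$ there is $c_{i,j}\in R\setminus\{0\}$ with $x_jx_i-c_{i,j}x_ix_j\in R+Rx_1+\cdots+Rx_n$. For each $i$ there are then an injective ring endomorphism $\sigma_i$ of $R$ and a $\sigma_i$-derivation $\delta_i$ of $R$ with $x_ir=\sigma_i(r)x_i+\delta_i(r)$ for all $r\in R$. $A$ is bijective if every $\sigma_i$ is bijective and every $c_{i,j}$ is invertible. Under these hypotheses $A$ is a left noetherian domain. Roots and vanishing sets: for $Z=(z_1,\dots,z_n)\in R^n$, $\langle Z\rangle$ denotes the two-sided ideal of $A$ generated by $x_1-z_1,\dots,x_n-z_n$.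 $Z$ is a root of $f\in A$, written $f(Z)=0$, iff $f\in\langle Z\rangle$. For $f\in A$, $V(f)=\{Z\in R^n: f(Z)=0\}$. Algebraic sets: a subset $X\subseteq R^n$ is algebraic if either $X=R^n$ or there exists $0\neq g\in A$ with $X\subseteq V(g)$. *)

(* Defs.v *)
From HB Require Import structures.
From mathcomp Require Import all_boot all_order all_algebra.
Set Implicit Arguments. Unset Strict Implicit. Unset Printing Implicit Defensive.
Import GRing.Theory.
Local Open Scope ring_scope.

(* R is a domain: no zero divisors (nontriviality 1 != 0 is built into nzRingType). *)
Definition is_domain (R : nzRingType) : Prop :=
  forall a b : R, a * b = 0 -> a = 0 \/ b = 0.

Definition is_left_ideal (R : nzRingType) (I : R -> Prop) : Prop :=
  [/\ I 0, (forall a b, I a -> I b -> I (a + b)) & (forall r a, I a -> I (r * a))].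

Definition left_noetherian (R : nzRingType) : Prop :=
  forall I : nat -> R -> Prop,
    (forall k, is_left_ideal (I k)) ->
    (forall k a, I k a -> I k.+1 a) ->
    exists N, forall m, (N <= m)%N -> forall a, I m a -> I N a.

Definition is_unit_elt (R : nzRingType) (c : R) : Prop :=
  exists c', c * c' = 1 /\ c' * c = 1.

(* R is identified with its image under the injective ring morphism phi : R -> A. *)

Definition monomial (A : nzRingType) (n : nat) (x : 'I_n -> A)
  (alpha : {ffun 'I_n -> nat}) : A :=
  \prod_(i < n) x i ^+ alpha i.

Definition skew_PBW (R A : nzRingType) (phi : {rmorphism R -> A}) (n : nat)
  (x : 'I_n -> A) : Prop :=
  [/\ (* (1) R is a subring of A *)
      injective phi,
      (forall a : A, exists (s : seq {ffun 'I_n -> nat}) (c : {ffun 'I_n -> nat} -> R),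
          a = \sum_(al <- s) phi (c al) * monomial x al),
      (forall (s : seq {ffun 'I_n -> nat}) (c : {ffun 'I_n -> nat} -> R),
          uniq s -> \sum_(al <- s) phi (c al) * monomial x al = 0 ->
          forall al, al \in s -> c al = 0),
      (forall (i : 'I_n) (r : R), r != 0 ->
          exists c : R, c != 0 /\ exists d : R, x i * phi r - phi c * x i = phi d)
    &
      (forall i j : 'I_n, exists c : R, c != 0 /\
          exists (d0 : R) (d : 'I_n -> R),
            x j * x i - phi c * x i * x j = phi d0 + \sum_(k < n) phi (d k) * x k)].

(* Bijectivity: every sigma_i is surjective (it is automatically injective),
   where x_i r = sigma_i(r) x_i + delta_i(r); i.e. for every s there is r with
   x_i r - s x_i in R.  And every c_{i,j} (uniquely determined) is invertible. *)
Definition bijective_skew_PBW (R A : nzRingType) (phi : {rmorphism R -> A}) (n : nat)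
  (x : 'I_n -> A) : Prop :=
  [/\ skew_PBW phi x,
      (forall (i : 'I_n) (s : R), exists r d : R, x i * phi r - phi s * x i = phi d)
    & (forall i j : 'I_n, exists c : R, is_unit_elt c /\
          exists (d0 : R) (d : 'I_n -> R),
            x j * x i - phi c * x i * x j = phi d0 + \sum_(k < n) phi (d k) * x k)].

(* membership in the two-sided ideal <Z> generated by x_1 - z_1, ..., x_n - z_n *)
Definition in_ideal_pt (R A : nzRingType) (phi : {rmorphism R -> A}) (n : nat)
  (x : 'I_n -> A) (Z : 'I_n -> R) (f : A) : Prop :=
  exists s : seq ('I_n * A * A),
    f = \sum_(t <- s) t.1.2 * (x t.1.1 - phi (Z t.1.1)) * t.2.

Definition is_root_pt (R A : nzRingType) (phi : {rmorphism R -> A}) (n : nat)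
  (x : 'I_n -> A) (f : A) (Z : 'I_n -> R) : Prop :=
  in_ideal_pt phi x Z f.

Definition Vset (R A : nzRingType) (phi : {rmorphism R -> A}) (n : nat)
  (x : 'I_n -> A) (f : A) : ('I_n -> R) -> Prop :=
  fun Z => is_root_pt phi x f Z.

Definition algebraic (R A : nzRingType) (phi : {rmorphism R -> A}) (n : nat)
  (x : 'I_n -> A) (X : ('I_n -> R) -> Prop) : Prop :=
  (forall Z, X Z) \/ exists g : A, g != 0 /\ forall Z, X Z -> Vset phi x g Z.

From Stdlib Require List.
Definition finite_pts (R : nzRingType) (n : nat) (X : ('I_n -> R) -> Prop) : Prop :=
  exists s : seq ('I_n -> R), forall Z, X Z <-> List.In Z s.

(* Main.v *)
Require Import Defs.
From mathcomp Require Import all_boot all_order all_algebra.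
Set Implicit Arguments. Unset Strict Implicit. Unset Printing Implicit Defensive.
Import GRing.Theory.
Local Open Scope ring_scope.

Section Dom.
Variables (R A : nzRingType) (phi : {rmorphism R -> A}) (n : nat) (x : 'I_n -> A).

Definition ole : rel 'I_n := fun a b => (a <= b)%N.
Lemma ole_trans : transitive ole. Proof. move=> a b c; exact: leq_trans. Qed.
Lemma ole_total : total ole. Proof. move=> a b; exact: leq_total. Qed.
Lemma ole_anti : antisymmetric ole.
Proof. move=> a b /andP[h1 h2]; apply: val_inj; apply/eqP; rewrite eqn_leq; by apply/andP; split. Qed.

Definition wp (w : seq 'I_n) : A := \prod_(j <- w) x j.
Definition nf (w : seq 'I_n) := sort ole w.
Definition word (al : {ffun 'I_n -> nat}) : seq 'I_n :=
  flatten [seq nseq (al j) j | j <- enum 'I_n].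
Definition cntf (w : seq 'I_n) : {ffun 'I_n -> nat} := [ffun j => count_mem j w].

Lemma wp_nil : wp [::] = 1. Proof. by rewrite /wp big_nil. Qed.
Lemma wp_cons i w : wp (i :: w) = x i * wp w. Proof. by rewrite /wp big_cons. Qed.
Lemma wp_rcons w i : wp (rcons w i) = wp w * x i. Proof. by rewrite /wp big_rcons. Qed.

Lemma mono_word al : monomial x al = wp (word al).
Proof.
rewrite /monomial /wp /word big_flatten big_map /= enumT.
apply: eq_bigr => j _; elim: (al j) => [|m IH]; first by rewrite big_nil expr0.
by rewrite /= big_cons exprS IH.
Qed.

Lemma sorted_nseq_cat m j s : all (ole j) s -> sorted ole s -> sorted ole (nseq m j ++ s).
Proof.
move=> ha hs; elim: m => [|m IH] //=.
rewrite (path_sortedE ole_trans) IH andbT all_cat ha andbT.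
by apply/allP => y /nseqP [-> _]; rewrite /ole leqnn.
Qed.

Lemma sorted_word al : sorted ole (word al).
Proof.
rewrite /word.
have: sorted ltn [seq val i | i <- enum 'I_n] by rewrite val_enum_ord iota_ltn_sorted.
elim: (enum 'I_n) => [|j L IH] //= hs.
apply: sorted_nseq_cat; last first.
  by apply: IH; move: hs; case: L => //= k L /andP[].
move: hs; rewrite (path_sortedE ltn_trans) => /andP[ha _].
apply/allP => y; case/flattenP => l /mapP [k kL ->] /nseqP [-> _].
by rewrite /ole ltnW //; move/allP: ha; apply; apply: map_f.
Qed.

Lemma count_word al j : count_mem j (word al) = al j.
Proof.
rewrite /word count_flatten -map_comp.
rewrite (eq_map (g := fun k => (k == j) * al k)%N); last first.
  by move=> k /=; rewrite count_nseq /= eq_sym.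
rewrite sumnE big_map enumT -/(index_enum _) (bigD1 j) //= eqxx mul1n big1 ?addn0 //.
by move=> k /negbTE ->.
Qed.

Lemma word_cnt w : sorted ole w -> word (cntf w) = w.
Proof.
move=> hw; apply: (sorted_eq ole_trans ole_anti) => //; first exact: sorted_word.
apply/allP => y _; by rewrite /= count_word ffunE.
Qed.


Lemma regroup (V : zmodType) (T K : eqType) (s : seq T) (f : T -> K) (F : T -> V) :
  \sum_(t <- s) F t = \sum_(k <- undup (map f s)) \sum_(t <- s | f t == k) F t.
Proof.
rewrite [RHS](eq_bigr (fun k => \sum_(t <- s) if f t == k then F t else 0)); last first.
  by move=> k _; rewrite big_mkcond.
rewrite exchange_big /=; apply: eq_big_seq => t ts; rewrite -big_mkcond /=.
rewrite big_const_seq (eq_count (a2 := pred1 (f t))); last by move=> k /=; rewrite eq_sym.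
by rewrite count_uniq_mem ?undup_uniq // mem_undup map_f //= addr0.
Qed.

Hypothesis HPBW : skew_PBW phi x.

Definition srt (s : seq (R * seq 'I_n)) := forall t, t \in s -> sorted ole t.2.

Lemma indepW (s : seq (R * seq 'I_n)) : srt s ->
  \sum_(t <- s) phi t.1 * wp t.2 = 0 ->
  forall w, sorted ole w -> \sum_(t <- s | t.2 == w) t.1 = 0.
Proof.
case: HPBW => _ _ hind _ _ hs hsum w hw.
pose u := undup [seq cntf t.2 | t <- s].
pose c al := \sum_(t <- s | cntf t.2 == al) t.1.
have hu : \sum_(al <- u) phi (c al) * monomial x al = 0.
  rewrite -[RHS]hsum [RHS](regroup _ (fun t => cntf t.2)); apply: eq_bigr => al _.
  rewrite rmorph_sum mulr_suml big_seq_cond [RHS]big_seq_cond; apply: eq_bigr => t /andP[ts /eqP <-].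
  by rewrite mono_word word_cnt //; apply: hs.
have hc := hind u c (undup_uniq _) hu.
have -> : \sum_(t <- s | t.2 == w) t.1 = c (cntf w).
  rewrite /c big_seq_cond [RHS]big_seq_cond; apply: eq_bigl => t.
  case ts: (t \in s) => /=; rewrite ?andbT ?andbF //.
  apply/eqP/eqP => [-> //|e]; by rewrite -(word_cnt (hs t ts)) e word_cnt.
case cu: (cntf w \in u); first exact: hc.
rewrite /c big1_seq // => t /andP[/eqP e ts]; move/negbT: cu; rewrite mem_undup -e.
by rewrite (map_f (fun t : R * seq 'I_n => cntf t.2) ts).
Qed.

Lemma spanW (a : A) : exists s : seq (R * seq 'I_n), srt s /\ a = \sum_(t <- s) phi t.1 * wp t.2.
Proof.
case: HPBW => _ hspan _ _ _; case: (hspan a) => s [c ->].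
exists [seq (c al, word al) | al <- s]; split.
  by move=> t /mapP [al _ ->]; apply: sorted_word.
by rewrite big_map; apply: eq_bigr => al _; rewrite mono_word.
Qed.


Definition comb (P : seq 'I_n -> Prop) (a : A) :=
  exists s : seq (R * seq 'I_n),
    a = \sum_(t <- s) phi t.1 * wp t.2 /\ forall t, t \in s -> sorted ole t.2 /\ P t.2.

Lemma comb0 P : comb P 0.
Proof. by exists [::]; rewrite big_nil. Qed.

Lemma combD P a b : comb P a -> comb P b -> comb P (a + b).
Proof.
move=> [s1 [-> h1]] [s2 [-> h2]]; exists (s1 ++ s2); rewrite big_cat; split => //.
by move=> t; rewrite mem_cat => /orP [/h1|/h2].
Qed.

Lemma comb_sum P (I : eqType) (r : seq I) (F : I -> A) :
  (forall i, i \in r -> comb P (F i)) -> comb P (\sum_(i <- r) F i).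
Proof.
elim: r => [|i r IH] h; first by rewrite big_nil; apply: comb0.
rewrite big_cons; apply: combD; first by apply: h; rewrite mem_head.
by apply: IH => j jr; apply: h; rewrite in_cons jr orbT.
Qed.

Lemma combL P r a : comb P a -> comb P (phi r * a).
Proof.
move=> [s [-> h]]; exists [seq (r * t.1, t.2) | t <- s]; rewrite big_map mulr_sumr; split.
  by apply: eq_bigr => t _ /=; rewrite rmorphM mulrA.
by move=> t /mapP [t' /h ht' ->].
Qed.

Lemma combN P a : comb P a -> comb P (- a).
Proof. by move=> h; rewrite -mulN1r -(rmorphN1 phi); apply: combL. Qed.

Lemma combB P a b : comb P a -> comb P b -> comb P (a - b).
Proof. by move=> ha hb; apply: combD => //; apply: combN. Qed.

Lemma comb_impl (P Q : seq 'I_n -> Prop) a :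
  (forall w, sorted ole w -> P w -> Q w) -> comb P a -> comb Q a.
Proof.
move=> hPQ [s [-> h]]; exists s; split => // t /h [h1 h2]; split => //; exact: hPQ.
Qed.

Lemma comb_basis (P : seq 'I_n -> Prop) r w : sorted ole w -> P w -> comb P (phi r * wp w).
Proof.
by move=> h1 h2; exists [:: (r, w)]; rewrite big_seq1; split => // t; rewrite inE => /eqP ->.
Qed.

Lemma comb_mul (P Q S : seq 'I_n -> Prop) a b : comb P a -> comb Q b ->
  (forall u v r r', sorted ole u -> sorted ole v -> P u -> Q v ->
     comb S (phi r * wp u * (phi r' * wp v))) -> comb S (a * b).
Proof.
move=> [s1 [-> h1]] [s2 [-> h2]] hS; rewrite mulr_suml; apply: comb_sum => t /h1 [t1 t2].
rewrite mulr_sumr; apply: comb_sum => t' /h2 [t1' t2']; exact: hS.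
Qed.


Hypothesis domR : is_domain R.

Lemma mulR_neq0 (a b : R) : a != 0 -> b != 0 -> a * b != 0.
Proof. by move=> ha hb; apply/eqP => /domR [/eqP|/eqP]; [rewrite (negbTE ha)|rewrite (negbTE hb)]. Qed.

Lemma ax3 i r : exists s d, x i * phi r = phi s * x i + phi d /\ (r != 0 -> s != 0).
Proof.
case: HPBW => _ _ _ h3 _.
have [->|hr] := eqVneq r 0.
  by exists 0, 0; rewrite !rmorph0 mulr0 mul0r addr0; split.
have [c [hc [d e]]] := h3 i r hr.
by exists c, d; split => //; rewrite -e addrC subrK.
Qed.

Lemma ax4 i j : exists c, c != 0 /\ exists d0 (d : 'I_n -> R),
  x i * x j = phi c * x j * x i + (phi d0 + \sum_(k < n) phi (d k) * x k).
Proof.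
case: HPBW => _ _ _ _ h4.
have [c [hc [d0 [d e]]]] := h4 j i.
by exists c; split => //; exists d0, d; rewrite -e addrC subrK.
Qed.

Lemma comb_wp w : sorted ole w -> comb (fun w' => size w' <= size w)%N (wp w).
Proof. by move=> sw; rewrite -[wp w]mul1r -(rmorph1 phi); apply: comb_basis. Qed.

Lemma comb_x j : comb (fun w' => size w' <= 1)%N (x j).
Proof.
have -> : x j = phi 1 * wp [:: j] by rewrite rmorph1 mul1r wp_cons wp_nil mulr1.
exact: comb_basis.
Qed.

Definition Pst (u v : seq 'I_n) r := exists k, (r != 0 -> k != 0) /\
  exists l, comb (fun w => size w < size u + size v)%N l /\
    wp u * phi r * wp v = phi k * wp (nf (u ++ v)) + l.

Definition Fm N := forall a b d e, (d + e <= N)%N ->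
  comb (fun w => size w <= d)%N a -> comb (fun w => size w <= e)%N b ->
  comb (fun w => size w <= d + e)%N (a * b).

Lemma PtoF N : (forall u v r, sorted ole u -> sorted ole v ->
  (size u + size v <= N)%N -> Pst u v r) -> Fm N.
Proof.
move=> HP a b d e hde ha hb; apply: (comb_mul ha hb) => u v r r' su sv hu hv.
have [k [_ [l [hl e1]]]] := HP u v r' su sv (leq_trans (leq_add hu hv) hde).
have -> : phi r * wp u * (phi r' * wp v) = phi r * (wp u * phi r' * wp v) by rewrite !mulrA.
rewrite e1 mulrDr mulrA -rmorphM; apply: combD.
  apply: comb_basis; first exact: (sort_sorted ole_total).
  by rewrite size_sort size_cat leq_add.
apply: combL; apply: comb_impl hl => w _ h.
exact: leq_trans (ltnW h) (leq_add hu hv).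
Qed.

Lemma Qlem N (HF : Fm N) i v : sorted ole v -> (size v <= N)%N ->
  exists c, c != 0 /\ exists l, comb (fun w => size w <= size v)%N l /\
    x i * wp v = phi c * wp (nf (i :: v)) + l.
Proof.
elim: v => [|j v IH] sv hN.
  exists 1; split; first exact: oner_neq0.
  exists 0; split; first exact: comb0.
  by rewrite /nf sorted_sort ?wp_cons ?wp_nil ?rmorph1 ?mul1r ?addr0 //; exact: ole_trans.
case hij: (ole i j).
  exists 1; split; first exact: oner_neq0.
  exists 0; split; first exact: comb0.
  rewrite /nf (sorted_sort ole_trans); first by rewrite [wp [:: i, j & v]]wp_cons rmorph1 mul1r addr0.
  by rewrite /= hij.
have hji : ole j i by move: (ole_total i j); rewrite hij.
move: (sv); rewrite /= (path_sortedE ole_trans) => /andP [hall sv'].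
have [c' [hc' [l' [hl' eIH]]]] := IH sv' (ltnW hN).
have [c [hc [d0 [d e4]]]] := ax4 i j.
have [s [dd [e3 hs]]] := ax3 j c'.
set nf1 := nf (i :: v).
have Hcl : j :: nf1 = nf (i :: j :: v).
  apply: (sorted_eq ole_trans ole_anti).
  - rewrite /= (path_sortedE ole_trans) (sort_sorted ole_total) andbT.
    apply/allP => y; rewrite mem_sort inE => /orP [/eqP -> //|yv].
    by move/allP: hall; apply.
  - exact: (sort_sorted ole_total).
  - rewrite perm_sym /nf1 /nf perm_sort perm_sym /=.
    apply: (@perm_trans _ (j :: i :: v)); first by rewrite perm_cons perm_sort.
    exact: permEl (perm_catCA [:: j] [:: i] v).

exists (c * s); split; first exact: mulR_neq0 (hs hc').
set E := phi d0 + \sum_(k < n) phi (d k) * x k.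
exists (phi (c * dd) * wp nf1 + phi c * (x j * l') + E * wp v); split.
  apply: combD; first apply: combD.
  - apply: comb_basis; first exact: (sort_sorted ole_total).
    by rewrite /nf1 size_sort.
  - apply: combL; rewrite -add1n; apply: HF => //; first exact: comb_x.
  - rewrite -add1n; apply: HF => //; last exact: comb_wp.
    apply: combD.
      have -> : phi d0 = phi d0 * wp [::] by rewrite wp_nil mulr1.
      exact: comb_basis.
    apply: comb_sum => k _.
    have -> : phi (d k) * x k = phi (d k) * wp [:: k] by rewrite wp_cons wp_nil mulr1.
    exact: comb_basis.
rewrite -Hcl !wp_cons mulrA e4 mulrDl -(mulrA _ (x i)) eIH mulrDr.
have -> : phi c * x j * (phi c' * wp nf1) =
    phi (c * s) * (x j * wp nf1) + phi (c * dd) * wp nf1.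
  by rewrite mulrA -(mulrA (phi c)) e3 mulrDr mulrDl !mulrA !rmorphM.
by rewrite !addrA -(mulrA (phi c) (x j) l').
Qed.


Lemma Pst_nil v r : sorted ole v -> Pst [::] v r.
Proof.
move=> sv; exists r; split => //; exists 0; split; first exact: comb0.
by rewrite wp_nil mul1r addr0 /= /nf (sorted_sort ole_trans).
Qed.

Lemma Pst_all N : forall u v r, sorted ole u -> sorted ole v ->
  (size u + size v <= N)%N -> Pst u v r.
Proof.
elim: N => [|N IHN].
  by case => [|? ?] v r _ sv // _; apply: Pst_nil.
have HF := PtoF IHN.
move=> u; elim/last_ind: u => [|u' i IHu] v r su sv hN; first exact: Pst_nil.
have su' : sorted ole u' by move: su; rewrite -cats1 => /cat_sorted2 [].
rewrite size_rcons addSn ltnS in hN.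
have [s [d [e3 hs]]] := ax3 i r.
have [c [hc [l [hl eQ]]]] := Qlem HF i sv (leq_trans (leq_addl _ _) hN).
set nf1 := nf (i :: v).
have snf1 : sorted ole nf1 by exact: (sort_sorted ole_total).
have hN1 : (size u' + size nf1 <= N.+1)%N by rewrite /nf1 /nf size_sort /= addnS ltnS.
have [k [hk [l2 [hl2 e2]]]] := IHu nf1 (s * c) su' snf1 hN1.
have [k3 [_ [l3 [hl3 e3']]]] := IHN u' v d su' sv hN.
have Hnf : nf (u' ++ nf1) = nf (rcons u' i ++ v).
  apply/(perm_sortP ole_total ole_trans ole_anti).
  by rewrite cat_rcons perm_cat2l /nf1 /nf perm_sort.
exists k; split.
  move=> hr; apply: hk; exact: mulR_neq0 (hs hr) hc.
exists (l2 + wp u' * phi s * l + (phi k3 * wp (nf (u' ++ v)) + l3)); split.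
  rewrite size_rcons addSn.
  apply: combD; first apply: combD.
  - by apply: comb_impl hl2 => w _; rewrite /nf1 /nf size_sort /= addnS.
  - rewrite -mulrA; apply: (comb_impl (P := fun w => (size w <= size u' + size v)%N)).
      by move=> w _ h; rewrite ltnS.
    apply: HF => //; first exact: comb_wp.
    exact: combL.
  - apply: combD.
      apply: comb_basis; first exact: (sort_sorted ole_total).
      by rewrite /nf size_sort size_cat.
    by apply: comb_impl hl3 => w _ h; apply: ltnW.
rewrite wp_rcons -(mulrA (wp u')) e3 mulrDr mulrDl e3' -Hnf.
have -> : wp u' * (phi s * x i) * wp v = wp u' * phi s * (x i * wp v) by rewrite !mulrA.
rewrite eQ mulrDr.
have -> : wp u' * phi s * (phi c * wp nf1) = wp u' * phi (s * c) * wp nf1 by rewrite rmorphM !mulrA.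
by rewrite e2 !addrA.
Qed.


Definition lexlt (f g : {ffun 'I_n -> nat}) :=
  exists j : 'I_n, (forall k : 'I_n, (k < j)%N -> f k = g k) /\ (f j < g j)%N.
Definition addf (f g : {ffun 'I_n -> nat}) : {ffun 'I_n -> nat} := [ffun j => f j + g j]%N.

Lemma lexlt_irr f : ~ lexlt f f.
Proof. by case=> j [_]; rewrite ltnn. Qed.

Lemma lexlt_trans f g h : lexlt f g -> lexlt g h -> lexlt f h.
Proof.
move=> [j1 [e1 l1]] [j2 [e2 l2]]; case: (ltngtP j1 j2) => hj.
- exists j1; split; last by rewrite -(e2 j1 hj).
  by move=> k hk; rewrite e1 // e2 // (ltn_trans hk hj).
- exists j2; split; last by rewrite (e1 j2 hj).
  by move=> k hk; rewrite e1 ?e2 // (ltn_trans hk hj).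
- have hj' : j1 = j2 by apply: val_inj.
  exists j1; split; last by rewrite (ltn_trans l1) // hj'.
  by move=> k hk; rewrite e1 ?e2 // -hj'.
Qed.

Lemma lexlt_total f g : f != g -> lexlt f g \/ lexlt g f.
Proof.
move=> hfg.
have hex : exists m, [exists k : 'I_n, (val k == m) && (f k != g k)].
  case: (boolP [exists k, f k != g k]) => [/existsP [k hk]|].
    by exists (val k); apply/existsP; exists k; rewrite eqxx hk.
  rewrite negb_exists => /forallP hall; case/negP: hfg; apply/eqP/ffunP => k.
  by have := hall k; rewrite negbK => /eqP.
case: (ex_minnP hex) => m /existsP [k /andP [/eqP hk hne]] hmin.
have hlow : forall j : 'I_n, (j < k)%N -> f j = g j.
  move=> j hj; apply/eqP; apply: contraTT hj => hj; rewrite -leqNgt hk.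
  by apply: hmin; apply/existsP; exists j; rewrite eqxx hj.
case: (ltngtP (f k) (g k)) => h.
- by left; exists k.
- by right; exists k; split => // j hj; rewrite hlow.
- by move: hne; rewrite h eqxx.
Qed.

Lemma lexlt_add f f' g g' : lexlt f f' -> (g = g' \/ lexlt g g') ->
  lexlt (addf f g) (addf f' g').
Proof.
move=> [j1 [e1 l1]] [<-|[j2 [e2 l2]]].
  exists j1; split; last by rewrite !ffunE ltn_add2r.
  by move=> k hk; rewrite !ffunE e1.
case: (ltngtP j1 j2) => hj.
- exists j1; split; last by rewrite !ffunE (e2 j1 hj) ltn_add2r.
  by move=> k hk; rewrite !ffunE e1 // e2 // (ltn_trans hk hj).
- exists j2; split; last by rewrite !ffunE (e1 j2 hj) ltn_add2l.
  by move=> k hk; rewrite !ffunE e2 // e1 // (ltn_trans hk hj).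
- have hj' : j1 = j2 by apply: val_inj.
  exists j1; split; last by rewrite !ffunE -addSn leq_add // ltnW // hj'.
  by move=> k hk; rewrite !ffunE e1 // e2 // -hj'.
Qed.

Lemma addfC f g : addf f g = addf g f.
Proof. by apply/ffunP => j; rewrite !ffunE addnC. Qed.

Lemma cntf_nf u v : cntf (nf (u ++ v)) = addf (cntf u) (cntf v).
Proof.
apply/ffunP => j; rewrite !ffunE.
by rewrite (permP (permEl (perm_sort ole (u ++ v)))) count_cat.
Qed.

Lemma size_nf u v : size (nf (u ++ v)) = (size u + size v)%N.
Proof. by rewrite size_sort size_cat. Qed.

Definition wlt (u v : seq 'I_n) :=
  (size u < size v)%N \/ (size u = size v /\ lexlt (cntf u) (cntf v)).

Lemma wlt_irr u : ~ wlt u u.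
Proof. by case=> [|[_ /lexlt_irr //]]; rewrite ltnn. Qed.

Lemma wlt_trans u v w : wlt u v -> wlt v w -> wlt u w.
Proof.
move=> [h1|[h1 l1]] [h2|[h2 l2]].
- by left; exact: ltn_trans h1 h2.
- by left; rewrite -h2.
- by left; rewrite h1.
- by right; split; [rewrite h1 h2|exact: lexlt_trans l1 l2].
Qed.

Lemma wlt_size u v : wlt u v -> (size u <= size v)%N.
Proof. by case=> [/ltnW|[->]]. Qed.

Lemma wlt_total u v : sorted ole u -> sorted ole v -> u != v -> wlt u v \/ wlt v u.
Proof.
move=> su sv huv; case: (ltngtP (size u) (size v)) => hs.
- by left; left.
- by right; left.
- have hc : cntf u != cntf v.
    apply: contra huv => /eqP e; by rewrite -(word_cnt su) -(word_cnt sv) e.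
  by case: (lexlt_total hc) => h; [left|right]; right.
Qed.

Definition wle u v := u = v \/ wlt u v.

Lemma wle_cases u v : wle u v ->
  (size u < size v)%N \/ (size u = size v /\ (cntf u = cntf v \/ lexlt (cntf u) (cntf v))).
Proof.
case=> [->|[h|[h1 h2]]]; first by right; split => //; left.
  by left.
by right; split => //; right.
Qed.

Lemma wle_size u v : wle u v -> (size u <= size v)%N.
Proof. by case=> [->//|/wlt_size]. Qed.

Lemma wlt_compat u u' v v' : wle u u' -> wle v v' -> (wlt u u' \/ wlt v v') ->
  wlt (nf (u ++ v)) (nf (u' ++ v')).
Proof.
move=> hu hv hs; rewrite /wlt !size_nf !cntf_nf.
have su := wle_size hu; have sv := wle_size hv.
case: (wle_cases hu) => [hu1|[hu1 hu2]]; first by left; rewrite -addSn leq_add.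
case: (wle_cases hv) => [hv1|[hv1 hv2]]; first by left; rewrite -addnS leq_add.
right; split; first by rewrite hu1 hv1.
case: hs => [[|[_ hl]]|[|[_ hl]]]; try by rewrite ?hu1 ?hv1 ltnn.
  exact: lexlt_add hl hv2.
rewrite addfC [addf (cntf u') _]addfC; apply: lexlt_add hl _.
by case: hu2 => [->|]; [left|right].
Qed.


Definition LF a k w := [/\ sorted ole w, k != 0 &
  exists l, comb (fun v => wlt v w) l /\ a = phi k * wp w + l].

Lemma LF_neq0 a k w : LF a k w -> a != 0.
Proof.
case=> sw hk [l [[s [-> hs]] ->]]; apply/eqP => h0.
have hsrt : srt ((k, w) :: s).
  by move=> t; rewrite inE => /orP [/eqP -> //|/hs []].
have hsum : \sum_(t <- (k, w) :: s) phi t.1 * wp t.2 = 0 by rewrite big_cons.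
have := indepW hsrt hsum sw.
rewrite big_cons /= eqxx big1_seq ?addr0.
- by move/eqP; rewrite (negbTE hk).
- move=> t /andP [/eqP e ts]; exfalso; have [_ h] := hs t ts; rewrite e in h.
  exact: wlt_irr h.
Qed.

Lemma wmax (L : seq (seq 'I_n)) : (forall w, w \in L -> sorted ole w) -> L != [::] ->
  exists2 m, m \in L & forall w, w \in L -> w = m \/ wlt w m.
Proof.
elim: L => [|w L IH] // hs _.
have hsw : sorted ole w by apply: hs; rewrite mem_head.
case: (eqVneq L [::]) => [->|hL].
  by exists w; rewrite ?mem_head // => w'; rewrite inE => /eqP ->; left.
have hsL : forall w', w' \in L -> sorted ole w'.
  by move=> w' h; apply: hs; rewrite in_cons h orbT.
have [m' mL hm'] := IH hsL hL.
have hsm : sorted ole m' by apply: hs; rewrite in_cons mL orbT.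
case: (eqVneq w m') => [e|hne].
  exists m'; first by rewrite in_cons mL orbT.
  by move=> w'; rewrite inE => /orP [/eqP ->|/hm'] //; left.
case: (wlt_total hsw hsm hne) => h.
  exists m'; first by rewrite in_cons mL orbT.
  by move=> w'; rewrite inE => /orP [/eqP ->|/hm'] //; right.
exists w; first by rewrite mem_head.
move=> w'; rewrite inE => /orP [/eqP ->|/hm' [->|h']]; [by left|by right|].
by right; exact: wlt_trans h' h.
Qed.

Lemma LF_exists a : a != 0 -> exists k w, LF a k w.
Proof.
move=> ha; have [s [hs ea]] := spanW a.
pose ws := undup [seq t.2 | t <- s].
pose coef w := \sum_(t <- s | t.2 == w) t.1.
have ea2 : a = \sum_(w <- ws) phi (coef w) * wp w.
  rewrite ea (regroup _ (fun t => t.2)); apply: eq_bigr => w _.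
  by rewrite rmorph_sum mulr_suml; apply: eq_bigr => t /eqP ->.
pose W := [seq w <- ws | coef w != 0].
have ea3 : a = \sum_(w <- W) phi (coef w) * wp w.
  rewrite ea2 big_filter [RHS]big_mkcond; apply: eq_bigr => w _.
  by case: eqP => [->|] /=; rewrite ?rmorph0 ?mul0r.
have sW : forall w, w \in W -> sorted ole w.
  move=> w; rewrite mem_filter mem_undup => /andP [_ /mapP [t ts ->]]; exact: hs.
case: (eqVneq W [::]) => [hW|hW].
  by move: ha; rewrite ea3 hW big_nil eqxx.
have [m mW hm] := wmax sW hW.
exists (coef m), m; split; first exact: sW.
  by move: mW; rewrite mem_filter => /andP [].
exists (\sum_(w <- W | w != m) phi (coef w) * wp w); split.
  rewrite -big_filter; apply: comb_sum => w; rewrite mem_filter => /andP [hne wW].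
  apply: comb_basis; first exact: sW.
  by case: (hm w wW) => // e; move: hne; rewrite e eqxx.
by rewrite ea3 (bigD1_seq m) // filter_uniq // undup_uniq.
Qed.

Lemma XT u v u' v' r r' : sorted ole u -> sorted ole v -> sorted ole u' -> sorted ole v' ->
  wle u' u -> wle v' v -> (wlt u' u \/ wlt v' v) ->
  comb (fun w => wlt w (nf (u ++ v))) (phi r * wp u' * (phi r' * wp v')).
Proof.
move=> su sv su' sv' hu hv hs.
have [k [_ [l [hl e1]]]] := Pst_all r' su' sv' (leqnn _).
have -> : phi r * wp u' * (phi r' * wp v') = phi r * (wp u' * phi r' * wp v') by rewrite !mulrA.
rewrite e1 mulrDr mulrA -rmorphM; apply: combD.
  apply: comb_basis; first exact: (sort_sorted ole_total).
  exact: wlt_compat.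
apply: combL; apply: comb_impl hl => w _ h; left; rewrite size_nf.
exact: leq_trans h (leq_add (wle_size hu) (wle_size hv)).
Qed.

Lemma LF_mul f g k1 k2 u v : LF f k1 u -> LF g k2 v -> exists k, LF (f * g) k (nf (u ++ v)).
Proof.
case=> su hk1 [l1 [hl1 ->]] [sv hk2 [l2 [hl2 ->]]].
have [k [hk [l0 [hl0 e0]]]] := Pst_all k2 su sv (leqnn _).
exists (k1 * k); split; first exact: (sort_sorted ole_total).
  exact: mulR_neq0 hk1 (hk hk2).
exists (phi k1 * l0 + (phi k1 * wp u * l2 + l1 * (phi k2 * wp v) + l1 * l2)); split.
  apply: combD.
    apply: combL; apply: comb_impl hl0 => w _ h; left; by rewrite size_nf.
  apply: combD; first apply: combD.
  - apply: (comb_mul (P := fun w => w = u) (Q := fun w => wlt w v)) => //.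
      exact: comb_basis.
    move=> u' v' r r' su' sv' -> hv'; apply: XT => //; [by left|by right|by right].
  - apply: (comb_mul (P := fun w => wlt w u) (Q := fun w => w = v)) => //.
      exact: comb_basis.
    move=> u' v' r r' su' sv' hu' ->; apply: XT => //; [by right|by left|by left].
  - apply: (comb_mul hl1 hl2) => u' v' r r' su' sv' hu' hv'.
    by apply: XT => //; [right|right|left].
rewrite mulrDl !mulrDr.
have -> : phi k1 * wp u * (phi k2 * wp v) = phi (k1 * k) * wp (nf (u ++ v)) + phi k1 * l0.
  have -> : phi k1 * wp u * (phi k2 * wp v) = phi k1 * (wp u * phi k2 * wp v) by rewrite !mulrA.
  by rewrite e0 mulrDr mulrA -rmorphM.
by rewrite !addrA.
Qed.

Lemma A_domain (f g : A) : f != 0 -> g != 0 -> f * g != 0.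
Proof.
move=> /LF_exists [k1 [u h1]] /LF_exists [k2 [v h2]].
have [k h] := LF_mul h1 h2; exact: LF_neq0 h.
Qed.

Lemma lin_neq0 i z : x i - phi z != 0.
Proof.
apply: (@LF_neq0 _ 1 [:: i]); split => //; first exact: oner_neq0.
exists (phi (- z) * wp [::]); split.
  by apply: comb_basis => //; left.
by rewrite rmorph1 mul1r wp_cons !wp_nil !mulr1 rmorphN.
Qed.

End Dom.

From Stdlib Require Import Classical FunctionalExtensionality.

Section Final.
Variables (R A : nzRingType) (phi : {rmorphism R -> A}) (n : nat) (x : 'I_n -> A).

Lemma ideal_mulr Z (f g : A) : in_ideal_pt phi x Z f -> in_ideal_pt phi x Z (f * g).
Proof.
case=> s ->; exists [seq (t.1, t.2 * g) | t <- s]; rewrite big_map mulr_suml.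
by apply: eq_bigr => t _ /=; rewrite mulrA.
Qed.

Lemma ideal_mull Z (f g : A) : in_ideal_pt phi x Z f -> in_ideal_pt phi x Z (g * f).
Proof.
case=> s ->; exists [seq ((t.1.1, g * t.1.2), t.2) | t <- s]; rewrite big_map mulr_sumr.
by apply: eq_bigr => t _ /=; rewrite !mulrA.
Qed.

Lemma ideal_gen Z i : in_ideal_pt phi x Z (x i - phi (Z i)).
Proof. by exists [:: ((i, 1), 1)]; rewrite big_seq1 /= mul1r mulr1. Qed.

Lemma alg_ext (X Y : ('I_n -> R) -> Prop) :
  (forall Z, X Z <-> Y Z) -> algebraic phi x Y -> algebraic phi x X.
Proof.
move=> e [h|[g [hg h]]]; first by left => Z; apply/e.
by right; exists g; split => // Z /e; apply: h.
Qed.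

Lemma alg_empty : algebraic phi x (fun _ => False).
Proof. by right; exists 1; split => //; exact: oner_neq0. Qed.

Lemma alg_union (dom : forall f g : A, f != 0 -> g != 0 -> f * g != 0) X Y :
  algebraic phi x X -> algebraic phi x Y -> algebraic phi x (fun Z => X Z \/ Y Z).
Proof.
move=> [hX|[g1 [h1 HX]]]; first by left => Z; left.
move=> [hY|[g2 [h2 HY]]]; first by left => Z; right.
right; exists (g1 * g2); split; first exact: dom.
move=> Z [hx|hy]; first exact: ideal_mulr (HX Z hx).
exact: ideal_mull (HY Z hy).
Qed.

Lemma alg_single (HP : skew_PBW phi x) Z0 : algebraic phi x (fun Z => Z0 = Z).
Proof.
case: (posnP n) => hn.
  left => Z; apply: functional_extensionality => i.
  by have := ltn_ord i; rewrite {2}hn.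
right; exists (x (Ordinal hn) - phi (Z0 (Ordinal hn))); split.
  exact: lin_neq0.
by move=> Z <-; apply: ideal_gen.
Qed.

End Final.

Theorem corollary4p5 (R A : nzRingType) (phi : {rmorphism R -> A}) (n : nat)
  (x : 'I_n -> A) :
  is_domain R -> left_noetherian R -> bijective_skew_PBW phi x ->
  (* (i) algebraic sets are the closed sets of a topology on R^n *)
  [/\ algebraic phi x (fun _ : 'I_n -> R => False),
      algebraic phi x (fun _ : 'I_n -> R => True),
      (forall X Y : ('I_n -> R) -> Prop,
          algebraic phi x X -> algebraic phi x Y ->
          algebraic phi x (fun Z => X Z \/ Y Z))
    & (forall (I : Type) (F : I -> ('I_n -> R) -> Prop),
          (forall k, algebraic phi x (F k)) ->
          algebraic phi x (fun Z => forall k, F k Z))]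
  /\
  (* (ii) every finite subset of R^n is algebraic *)
  (forall X : ('I_n -> R) -> Prop,
      finite_pts X ->
      algebraic phi x X).
Proof.
move=> domR _ [HP _ _].
have dom : forall f g : A, f != 0 -> g != 0 -> f * g != 0.
  by move=> f g; apply: (A_domain HP domR).
split; first split.
- exact: alg_empty.
- by left.
- by move=> X Y; apply: alg_union.
- move=> I F hF.
  case: (classic (forall k Z, F k Z)) => [h|h]; first by left => Z k.
  have [k hk] := not_all_ex_not _ _ h.
  case: (hF k) => [//|[g [hg H]]].
  by right; exists g; split => // Z hZ; apply: H.
- move=> X [s hs]; apply: (alg_ext hs).
  elim: s {hs} => [|Z0 s IH] /=; first exact: alg_empty.
  exact: alg_union (alg_single HP Z0) IH.
Qed.
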